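(* Let $G=(V,E)$ be a finite simple connected graph and let $\lambda\in(0,1)$. Then $$\sum_{u\in V} t^{e}_{\lambda}(u)\;=\;\sum_{\substack{(k,l)\in V\times V\\ k\neq l}} d(k,l)\,\lambda^{d(k,l)}\;=\;\sum_{u\in V} c^{e}_{\lambda}(u),$$ where the middle sum runs over ordered pairs of distinct vertices.
   Context: $d(u,v)$ denotes the distance between vertices $u,v$ in $G$, and $[u]$ denotes the set of neighbours of $u$. For a vertex $u$, $t^{e}_{\lambda}(u)=\sum_{v\in V\setminus\{u\}} d(u,v)\lambda^{d(u,v)}$. For vertices $k,l$, $s^{kl}$ is the number of shortest $k$–$l$ paths, and for an edge $uv$, $s^{kl}_{uv}$ is the number of shortest $k$–$l$ paths that pass through the edge $uv$. The exponential edge betweenness of an edge $uv$ is $b^{e}_{\lambda}(uv)=\sum_{\{k,l\}} \frac{s^{kl}_{uv}}{s^{kl}}\lambda^{d(k,l)}$, the sum running over all unordered pairs $\{k,l\}$ of distinct vertices of $V$. The exponential betweenness centrality of a vertex $u$ is $c^{e}_{\lambda}(u)=\sum_{v\in[u]} b^{e}_{\lambda}(uv)$. *)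

(* Defs.v *)
(* A finite simple graph is a symmetric irreflexive relation
   e : rel T on a finType T. *)
From mathcomp Require Import all_boot all_order all_algebra.
Set Implicit Arguments. Unset Strict Implicit. Unset Printing Implicit Defensive.
Import Order.TTheory GRing.Theory Num.Theory.

Section Graph.
Variables (T : finType) (e : rel T).

Definition walkb (n : nat) (k l : T) (p : n.-tuple T) : bool :=
  path e k p && (last k p == l).

(* graph distance d(k,l): least n such that a walk of length n from k to l
   exists (searched among n < #|T|, which suffices in a connected graph) *)
Definition dist (k l : T) : nat :=
  find (fun n => [exists p : n.-tuple T, walkb k l p]) (iota 0 #|T|).

Definition shortest (k l : T) : {set (dist k l).-tuple T} :=
  [set p | walkb k l p].

Definition nsp (k l : T) : nat := #|shortest k l|.

Definition through (u v k : T) (p : seq T) : bool :=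
  has (fun xy : T * T => ((xy.1 == u) && (xy.2 == v)) || ((xy.1 == v) && (xy.2 == u)))
      (zip (k :: p) p).

Definition nsp_edge (u v k l : T) : nat :=
  #|[set p in shortest k l | through u v k p]|.

Local Open Scope ring_scope.
Variable R : realFieldType.

Definition t_exp (lam : R) (u : T) : R :=
  \sum_(v | v != u) (dist u v)%:R * lam ^+ dist u v.

(* b^e_lambda(uv): sum over unordered pairs {k,l} of distinct vertices,
   each represented once as (k,l) with enum_rank k < enum_rank l *)
Definition b_exp (lam : R) (u v : T) : R :=
  \sum_(k : T) \sum_(l : T | (enum_rank k < enum_rank l)%N)
     ((nsp_edge u v k l)%:R / (nsp k l)%:R) * lam ^+ dist k l.

Definition c_exp (lam : R) (u : T) : R :=
  \sum_(v | e u v) b_exp lam u v.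

End Graph.

(* Main.v *)
Require Import Defs.
From mathcomp Require Import all_boot all_order all_algebra.
Import Order.TTheory GRing.Theory Num.Theory.

Section Helpers.
Variables (T : finType) (e : rel T).
Hypothesis e_sym : symmetric e.

Definition Wk n k l := [exists p : n.-tuple T, walkb e k l p].

Lemma WkP n k l : reflect (exists p : seq T, [/\ size p = n, path e k p & last k p = l]) (Wk n k l).
Proof.
apply: (iffP existsP) => [[p /andP[hp /eqP hl]] | [p [hs hp hl]]].
  by exists (val p); rewrite size_tuple.
have hs' : size p == n by apply/eqP.
by exists (Tuple hs'); rewrite /walkb /= hp hl eqxx.
Qed.

Lemma Wk_sym1 n k l : Wk n k l -> Wk n l k.
Proof.
move/WkP=> [p [hs hp hl]]; apply/WkP.
exists (rev (belast k p)); split.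
- by rewrite size_rev size_belast.
- rewrite -hl rev_path (eq_path (e' := e)) // => x y /=; exact: e_sym.
- case: p hs hp hl => [|y p] /= _ _ hl; first by rewrite hl.
  by rewrite rev_cons last_rcons.
Qed.

Lemma Wk_sym n k l : Wk n k l = Wk n l k.
Proof. by apply/idP/idP; apply: Wk_sym1. Qed.

Lemma dist_sym k l : dist e k l = dist e l k.
Proof. by rewrite /dist; apply: eq_find => n; exact: Wk_sym. Qed.

Lemma size_shorten_le (x : T) (p : seq T) : size (shorten x p) <= size p.
Proof.
elim: p x => [|y p IH] x //=.
case: ifP => _ /=; last by rewrite ltnS.
exact: leq_trans (IH x) (leqnSn _).
Qed.

Lemma size_shorten_lt (x : T) (p : seq T) : ~~ uniq (x :: p) -> size (shorten x p) < size p.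
Proof.
elim: p x => [|y p IH] x //=.
case: ifP => hx; first by rewrite /= ltnS size_shorten_le.
move=> hu /=; rewrite ltnS; apply: IH; move: hu; rewrite cons_uniq; case: (x \in y :: p) hx => //.
Qed.

Hypothesis e_conn : forall x y : T, connect e x y.

Lemma dist_lt k l : (dist e k l < #|T|) && Wk (dist e k l) k l.
Proof.
have [p hp hl] := connectP (e_conn k l).
move: hl; case: (shortenP hp) => p' hp' hu _ hl.
have hs : size p' < #|T|.
  have := max_card (mem (k :: p')); move/card_uniqP: hu => -> /=; done.
have hh : has (fun n => Wk n k l) (iota 0 #|T|).
  apply/hasP; exists (size p'); first by rewrite mem_iota.
  by apply/WkP; exists p'.
have hf := hh; rewrite has_find size_iota in hf.
have := nth_find 0 hh; rewrite nth_iota // add0n => hw.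
by apply/andP; split; [exact: hf | exact: hw].
Qed.

Lemma dist_min m k l : m < dist e k l -> ~~ Wk m k l.
Proof.
move=> hm.
have hT : m < #|T|.
  apply: leq_trans hm _; have := find_size (fun n => Wk n k l) (iota 0 #|T|).
  by rewrite size_iota.
have := before_find 0 hm; rewrite nth_iota // add0n => h.
by rewrite /Wk; apply/negbT; exact: h.
Qed.

Lemma shortest_uniq k l (p : seq T) : size p = dist e k l -> path e k p -> last k p = l ->
  uniq (k :: p).
Proof.
move=> hs hp hl; apply/negPn/negP => hnu.
move: (size_shorten_lt k p hnu) hl; case: (shortenP hp) => p' hp' _ _ hlt hl.
have := @dist_min (size p') k l.
rewrite -hs hlt => /(_ isT) /negP; apply; apply/WkP; by exists p'.
Qed.

Lemma nsp_pos k l : 0 < nsp e k l.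
Proof.
have /andP[_ /existsP[p hp]] := dist_lt k l.
by apply/card_gt0P; exists p; rewrite inE.
Qed.


Lemma through_cons u v x y (p : seq T) :
  through u v x (y :: p) = ((x == u) && (y == v) || (x == v) && (y == u)) || through u v y p.
Proof. by []. Qed.

Lemma through_mem u v x (p : seq T) : through u v x p -> (u \in x :: p) && (v \in x :: p).
Proof.
elim: p x => [|y p IH] x //; rewrite through_cons => /orP[/orP[]/andP[/eqP-> /eqP->]|].
- by rewrite !inE !eqxx !orbT.
- by rewrite !inE !eqxx !orbT.
move/IH/andP => [hu hv]; apply/andP; split; rewrite inE; apply/orP; right; by [].
Qed.

Lemma through_edge u v x (p : seq T) : path e x p -> through u v x p -> e u v.
Proof.
elim: p x => [|y p IH] x //=; move=> /andP[hxy hp]; rewrite through_cons.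
case/orP => [/orP[]/andP[/eqP<- /eqP<-] //|]; last exact: IH.
by rewrite e_sym.
Qed.

Lemma sum_pair_eq (x y : T) : (\sum_(u : T) \sum_(v : T) ((x == u) && (y == v) : nat))%N = 1%N.
Proof.
rewrite (bigD1 x) //=.
rewrite [X in (_ + X)%N]big1 => [|u hu]; last first.
  by apply: big1 => v _; rewrite eq_sym (negbTE hu).
rewrite addn0 (bigD1 y) //= !eqxx /= [X in (_ + X)%N]big1 // => v hv.
by rewrite eq_sym (negbTE hv).
Qed.

Lemma through_count x (p : seq T) : uniq (x :: p) ->
  (\sum_(u : T) \sum_(v : T) (through u v x p : nat))%N = (2 * size p)%N.
Proof.
elim: p x => [|y p IH] x.
  by move=> _; rewrite muln0; apply: big1 => u _; apply: big1.
move=> hu; have hu' : uniq (y :: p) by case/andP: hu.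
have hx : x \notin y :: p by case/andP: hu.
have hxy : x != y by apply: contra hx => /eqP->; rewrite mem_head.
have -> : (\sum_(u : T) \sum_(v : T) (through u v x (y :: p) : nat))%N =
   (\sum_(u : T) \sum_(v : T) ((x == u) && (y == v) : nat) +
    \sum_(u : T) \sum_(v : T) ((x == v) && (y == u) : nat) +
    \sum_(u : T) \sum_(v : T) (through u v y p : nat))%N.
  rewrite -!big_split; apply: eq_bigr => u _; rewrite -!big_split; apply: eq_bigr => v _ /=.
  rewrite through_cons.
  have d1 : ~~ (((x == u) && (y == v)) && ((x == v) && (y == u))).
    apply/negP => /andP[/andP[/eqP h1 _] /andP[_ /eqP h4]].
    by move: hxy; rewrite h1 h4 eqxx.
  have d2 : ((x == u) && (y == v) || (x == v) && (y == u)) -> ~~ through u v y p.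
    move=> hb; apply/negP => ht; move: (through_mem u v y p ht) => /andP[ha hb'].
    by case/orP: hb => /andP[/eqP hh _]; move: hx; rewrite hh ?ha ?hb'.
  move: d1 d2.
  case: ((x == u) && (y == v)); case: ((x == v) && (y == u)); case: (through u v y p) => //=;
   by move=> _ /(_ isT).
rewrite sum_pair_eq exchange_big /= sum_pair_eq IH //= mulnS.
by [].
Qed.


Lemma nsp_edge_sum k l u v :
  nsp_edge e u v k l = (\sum_(p in shortest e k l) (through u v k p : nat))%N.
Proof.
rewrite /nsp_edge -sum1_card big_mkcond [RHS]big_mkcond; apply: eq_bigr => p _ /=.
by rewrite inE; case: (p \in shortest e k l); case: (through u v k p).
Qed.

Lemma edge_total k l :
  (\sum_(u : T) \sum_(v | e u v) nsp_edge e u v k l)%N = (nsp e k l * (2 * dist e k l))%N.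
Proof.
under eq_bigr => u _ do under eq_bigr => v _ do rewrite nsp_edge_sum.
under eq_bigr => u _ do rewrite exchange_big.
rewrite exchange_big /= /nsp -sum_nat_const; apply: eq_bigr => p.
rewrite inE => /andP[hp /eqP hl].
have hu : uniq (k :: p) by apply: (@shortest_uniq k l p) => //; rewrite size_tuple.
have := through_count k p hu; rewrite size_tuple => <-; apply: eq_bigr => u _.
rewrite big_mkcond; apply: eq_bigr => v _.
case he: (e u v) => //; case ht: (through u v k p) => //.
by rewrite (through_edge u v k p hp ht) in he.
Qed.

End Helpers.

Local Open Scope ring_scope.

Theorem theorem1 (T : finType) (e : rel T) (R : realFieldType) (lam : R)
  (e_sym : symmetric e) (e_irr : irreflexive e)
  (e_conn : forall x y : T, connect e x y)
  (lam_gt0 : 0 < lam) (lam_lt1 : lam < 1) :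
  \sum_(u : T) t_exp e lam u
    = \sum_(k : T) \sum_(l : T | l != k) (dist e k l)%:R * lam ^+ dist e k l
  /\
  \sum_(k : T) \sum_(l : T | l != k) (dist e k l)%:R * lam ^+ dist e k l
    = \sum_(u : T) c_exp e lam u.
Proof.
split; first by [].
rewrite /c_exp /b_exp.
under [RHS]eq_bigr => u _ do rewrite exchange_big.
rewrite [RHS]exchange_big /=.
under [RHS]eq_bigr => k _ do (under eq_bigr => u _ do rewrite exchange_big; rewrite exchange_big /=).
have step : forall k l,
  \sum_(u : T) \sum_(v | e u v)
     ((nsp_edge e u v k l)%:R / (nsp e k l)%:R * lam ^+ dist e k l)
  = (2 * dist e k l)%:R * lam ^+ dist e k l :> R.
  move=> k l.
  under eq_bigr => u _ do rewrite -big_distrl /= -big_distrl /=.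
  rewrite -big_distrl /= -big_distrl /=.
  under eq_bigr => u _ do rewrite -natr_sum.
  rewrite -natr_sum edge_total //.
  congr (_ * _); rewrite [X in X / _]natrM mulrC mulKf // pnatr_eq0 -lt0n; exact: nsp_pos.
transitivity (\sum_(k : T) \sum_(l : T | (enum_rank k < enum_rank l)%N)
   (2 * dist e k l)%:R * lam ^+ dist e k l); last first.
  apply: eq_bigr => k _; apply: eq_bigr => l _; symmetry; exact: step.
under eq_bigr => k _ do rewrite (bigID (fun l => (enum_rank k < enum_rank l)%N)) /=.
rewrite big_split /=.
have c1 : forall k l : T, ((l != k) && (enum_rank k < enum_rank l)%N) = (enum_rank k < enum_rank l)%N.
  by move=> k l; case: eqP => [->|] /=; [rewrite ltnn | by []].
have c2 : forall k l : T, ((l != k) && ~~ (enum_rank k < enum_rank l)%N) = (enum_rank l < enum_rank k)%N.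
  move=> k l; rewrite -leqNgt; apply/andP/idP => [[hne hle]|hlt].
    rewrite ltn_neqAle hle andbT; apply: contra hne => /eqP h.
    by apply/eqP; apply: enum_rank_inj; apply: val_inj.
  split; last exact: ltnW.
  by apply: contraTneq hlt => ->; rewrite ltnn.
under [X in X + _]eq_bigr => k _ do rewrite (eq_bigl _ _ (c1 k)).
under [X in _ + X]eq_bigr => k _ do rewrite (eq_bigl _ _ (c2 k)).
rewrite [X in _ + X](exchange_big_dep predT) //=.
rewrite -big_split; apply: eq_bigr => k _; rewrite -big_split; apply: eq_bigr => l _ /=.
by rewrite (@dist_sym T e e_sym l k) -mulrDl -natrD addnn mul2n.
Qed.
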